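(* Let $\Sigma$ be a finite set of tgds over a schema $\mathbf R$, and let $\widetilde\Sigma=\{\tilde\xi:\xi\in\Sigma\}$ be its semi-enrichment, where for $\xi=\alpha(\bar x,\bar y)\rightarrow\exists\bar z\,\beta(\bar x,\bar z)$ we set $\tilde\xi=\alpha(\bar x,\bar y)\rightarrow\exists\bar z\,\beta(\bar x,\bar z),H(\bar x)$ with $H$ a new relation symbol not in $\mathbf R$. Then $\Sigma\in\mathsf{CT}^{\mathsf{sobl}}_{\forall\forall}$ if and only if $\widetilde\Sigma\in\mathsf{CT}^{\mathsf{std}}_{\forall\forall}$.
   Context: In a tgd $\alpha(\bar x,\bar y)\rightarrow\exists\bar z\,\beta(\bar x,\bar z)$, $\bar x$ are the variables occurring in both body and head. Instances are finite sets of atoms over constants and nulls. A trigger for tgd $\xi$ on $I$ is $(\xi,h)$ with $h(\alpha)\subseteq I$; it is active if no extension $h'$ of $h$ has $h'(\beta)\subseteq I$; firing it adds $h'(\beta)$ with $h'$ extending $h$ by fresh nulls. A standard chase sequence fires only active triggers; a semi-oblivious chase sequence fires any triggers but never two triggers $(\xi,h),(\xi,g)$ of the same tgd with $h(\bar x)=g(\bar x)$. Infinite sequences are assumed fair; a sequence terminates if it is finite and no further step of the variant is possible. $\mathsf{CT}^{\star}_{\forall\forall}$ is the class of finite tgd sets $\Sigma$ such that for every instance all $\star$-chase sequences with $\Sigma$ terminate. *)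

(* Defs.v *)
From Stdlib Require Import List Arith.
Import ListNotations.

Inductive Term : Type := Const (c : nat) | Null (n : nat).

(* Relation symbols: the schema R consists of the symbols [RBase r];
   [RH i] is a fresh symbol (not in R), used as the new symbol H of the
   semi-enrichment of the i-th tgd. *)
Inductive RSym : Type := RBase (r : nat) | RH (i : nat).

Record Atom : Type := mkAtom { arel : RSym; aargs : list Term }.

(* A (finite) instance: a finite set of atoms, represented by a list
   (only membership [In] is ever used). *)
Definition Instance := list Atom.

Record VAtom : Type := mkVAtom { vrel : RSym; vargs : list nat }.

Record TGD : Type := mkTGD { body : list VAtom; head : list VAtom }.

Definition body_vars (xi : TGD) : list nat := flat_map vargs (body xi).
Definition head_vars (xi : TGD) : list nat := flat_map vargs (head xi).

Definition frontier (xi : TGD) : list nat :=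
  nodup Nat.eq_dec
    (filter (fun x => existsb (Nat.eqb x) (head_vars xi)) (body_vars xi)).

Definition inst (h : nat -> Term) (a : VAtom) : Atom :=
  mkAtom (vrel a) (map h (vargs a)).

Definition over_R (xi : TGD) : Prop :=
  (forall a, In a (body xi) -> exists r, vrel a = RBase r) /\
  (forall a, In a (head xi) -> exists r, vrel a = RBase r).

Definition enrich_tgd (i : nat) (xi : TGD) : TGD :=
  mkTGD (body xi) (head xi ++ [mkVAtom (RH i) (frontier xi)]).

Fixpoint enrich_aux (i : nat) (L : list TGD) : list TGD :=
  match L with
  | [] => []
  | xi :: L' => enrich_tgd i xi :: enrich_aux (Datatypes.S i) L'
  end.

Definition semi_enrichment (Sigma : list TGD) : list TGD := enrich_aux 0 Sigma.

Definition Trigger : Type := (nat * (nat -> Term))%type.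

Definition hom_body (xi : TGD) (I : Instance) (h : nat -> Term) : Prop :=
  forall a, In a (body xi) -> In (inst h a) I.

Definition extends_on (xi : TGD) (h' h : nat -> Term) : Prop :=
  forall x, In x (body_vars xi) -> h' x = h x.

Definition satisfied_ext (xi : TGD) (I : Instance) (h : nat -> Term) : Prop :=
  exists h', extends_on xi h' h /\ (forall a, In a (head xi) -> In (inst h' a) I).

Definition null_in (n : nat) (I : Instance) : Prop :=
  exists a, In a I /\ In (Null n) (aargs a).

Definition existential (xi : TGD) (z : nat) : Prop :=
  In z (head_vars xi) /\ ~ In z (body_vars xi).

Definition fires (xi : TGD) (I : Instance) (h : nat -> Term) (J : Instance) : Prop :=
  exists h', extends_on xi h' h /\
    (forall z, existential xi z -> exists n, h' z = Null n /\ ~ null_in n I) /\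
    (forall z1 z2, existential xi z1 -> existential xi z2 -> h' z1 = h' z2 -> z1 = z2) /\
    J = I ++ map (inst h') (head xi).

Definition is_trigger (Sigma : list TGD) (I : Instance) (t : Trigger) : Prop :=
  exists xi, nth_error Sigma (fst t) = Some xi /\ hom_body xi I (snd t).

Definition is_active (Sigma : list TGD) (I : Instance) (t : Trigger) : Prop :=
  exists xi, nth_error Sigma (fst t) = Some xi /\ hom_body xi I (snd t) /\
    ~ satisfied_ext xi I (snd t).

Definition so_equiv (Sigma : list TGD) (t1 t2 : Trigger) : Prop :=
  fst t1 = fst t2 /\
  exists xi, nth_error Sigma (fst t1) = Some xi /\
    map (snd t1) (frontier xi) = map (snd t2) (frontier xi).

Inductive variant : Type := Std | SObl.

(* One chase step with trigger t (local condition only). *)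
Definition step (v : variant) (Sigma : list TGD) (I : Instance) (t : Trigger)
    (J : Instance) : Prop :=
  exists xi, nth_error Sigma (fst t) = Some xi /\ hom_body xi I (snd t) /\
    (v = Std -> ~ satisfied_ext xi I (snd t)) /\
    fires xi I (snd t) J.

Definition valid_fin (v : variant) (Sigma : list TGD) (I0 : Instance) (n : nat)
    (I : nat -> Instance) (t : nat -> Trigger) : Prop :=
  I 0 = I0 /\
  (forall k, k < n -> step v Sigma (I k) (t k) (I (S k))) /\
  (v = SObl -> forall k l, k < l -> l < n -> ~ so_equiv Sigma (t k) (t l)).

Definition valid_inf (v : variant) (Sigma : list TGD) (I0 : Instance)
    (I : nat -> Instance) (t : nat -> Trigger) : Prop :=
  I 0 = I0 /\
  (forall k, step v Sigma (I k) (t k) (I (S k))) /\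
  (v = SObl -> forall k l, k < l -> ~ so_equiv Sigma (t k) (t l)).

Definition can_extend (v : variant) (Sigma : list TGD) (n : nat)
    (I : nat -> Instance) (t : nat -> Trigger) : Prop :=
  exists t' J, step v Sigma (I n) t' J /\
    (v = SObl -> forall k, k < n -> ~ so_equiv Sigma (t k) t').

Definition fair (v : variant) (Sigma : list TGD) (I : nat -> Instance)
    (t : nat -> Trigger) : Prop :=
  match v with
  | Std => forall k tr, is_active Sigma (I k) tr ->
             exists j, k <= j /\ ~ is_active Sigma (I j) tr
  | SObl => forall k tr, is_trigger Sigma (I k) tr ->
             exists j, so_equiv Sigma (t j) tr
  end.

Inductive ChaseSeq : Type :=
  | FinSeq (n : nat) (I : nat -> Instance) (t : nat -> Trigger)
  | InfSeq (I : nat -> Instance) (t : nat -> Trigger).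

Definition is_chase_seq (v : variant) (Sigma : list TGD) (I0 : Instance)
    (s : ChaseSeq) : Prop :=
  match s with
  | FinSeq n Is ts => valid_fin v Sigma I0 n Is ts /\ ~ can_extend v Sigma n Is ts
  | InfSeq Is ts => valid_inf v Sigma I0 Is ts /\ fair v Sigma Is ts
  end.

Definition terminates (v : variant) (Sigma : list TGD) (s : ChaseSeq) : Prop :=
  match s with
  | FinSeq n Is ts => ~ can_extend v Sigma n Is ts
  | InfSeq _ _ => False
  end.

Definition CT (v : variant) (Sigma : list TGD) : Prop :=
  forall I0 s, is_chase_seq v Sigma I0 s -> terminates v Sigma s.

(* Main.v *)
From Stdlib Require Import List Arith Lia Bool FinFun.
From Stdlib Require Import ClassicalEpsilon Classical Cantor.
Import ListNotations.
Require Import Defs.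

Lemma fchoice {A B : Type} (R : A -> B -> Prop) :
  (forall a, exists b, R a b) -> exists f : A -> B, forall a, R a (f a).
Proof.
  intros H. exists (fun a => proj1_sig (constructive_indefinite_description _ (H a))).
  intro a. exact (proj2_sig (constructive_indefinite_description _ (H a))).
Qed.

Lemma map_eq_In {A B} (f g : A -> B) l x : map f l = map g l -> In x l -> f x = g x.
Proof.
  induction l; simpl; intros H Hi; [destruct Hi|].
  inversion H; subst. destruct Hi as [<-|Hi]; auto.
Qed.

Lemma frontier_spec xi x : In x (frontier xi) <-> In x (body_vars xi) /\ In x (head_vars xi).
Proof.
  unfold frontier. rewrite nodup_In, filter_In, existsb_exists.
  split; intros [H1 H2]; split; auto.
  - destruct H2 as [y [Hy Heq]]. apply Nat.eqb_eq in Heq. subst; auto.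
  - exists x. rewrite Nat.eqb_refl. auto.
Qed.

Lemma front_body xi x : In x (frontier xi) -> In x (body_vars xi).
Proof. intro H; apply frontier_spec in H; tauto. Qed.

Lemma head_vars_enrich i xi : head_vars (enrich_tgd i xi) = head_vars xi ++ frontier xi.
Proof. unfold head_vars, enrich_tgd; simpl. rewrite flat_map_app. simpl. rewrite app_nil_r. reflexivity. Qed.

Lemma frontier_enrich i xi : frontier (enrich_tgd i xi) = frontier xi.
Proof.
  unfold frontier. rewrite head_vars_enrich. f_equal.
  change (body_vars (enrich_tgd i xi)) with (body_vars xi).
  apply filter_ext_in. intros x Hx.
  rewrite existsb_app. destruct (existsb (Nat.eqb x) (head_vars xi)) eqn:E; auto.
  simpl. destruct (existsb (Nat.eqb x) (frontier xi)) eqn:E2; auto.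
  apply existsb_exists in E2 as [y [Hy Hxy]]. apply Nat.eqb_eq in Hxy; subst.
  apply frontier_spec in Hy as [_ Hh].
  assert (existsb (Nat.eqb y) (head_vars xi) = true)
    by (apply existsb_exists; exists y; rewrite Nat.eqb_refl; auto).
  congruence.
Qed.

Lemma existential_enrich i xi z : existential (enrich_tgd i xi) z <-> existential xi z.
Proof.
  unfold existential. rewrite head_vars_enrich, in_app_iff.
  change (body_vars (enrich_tgd i xi)) with (body_vars xi).
  split.
  - intros [[H|H] H2]; split; auto. apply front_body in H. tauto.
  - intros [H H2]; split; auto.
Qed.

Lemma nth_enrich_aux L : forall j i,
  nth_error (enrich_aux j L) i = option_map (enrich_tgd (j+i)) (nth_error L i).
Proof.
  induction L; intros j [|i]; simpl; auto.
  - rewrite Nat.add_0_r; auto.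
  - rewrite IHL. replace (S j + i) with (j + S i) by lia. reflexivity.
Qed.

Lemma nth_semi Sg i : nth_error (semi_enrichment Sg) i = option_map (enrich_tgd i) (nth_error Sg i).
Proof. apply nth_enrich_aux. Qed.

Lemma sat_lemma xi i g hk hk' I :
  extends_on xi hk' hk -> map hk (frontier xi) = map g (frontier xi) ->
  (forall a, In a (head xi) -> In (inst hk' a) I) ->
  In (mkAtom (RH i) (map g (frontier xi))) I ->
  satisfied_ext (enrich_tgd i xi) I g.
Proof.
  intros Hext Hmap Hhead HH.
  pose (hs := fun v => if in_dec Nat.eq_dec v (body_vars xi) then g v else hk' v).
  exists hs. split.
  - intros x Hx. change (body_vars (enrich_tgd i xi)) with (body_vars xi) in Hx.
    unfold hs. destruct (in_dec Nat.eq_dec x (body_vars xi)); tauto.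
  - intros a Ha. simpl in Ha. apply in_app_or in Ha as [Ha|[<-|[]]].
    + enough (E : inst hs a = inst hk' a) by (rewrite E; auto).
      unfold inst. f_equal. apply map_ext_in. intros v Hv. unfold hs.
      destruct (in_dec Nat.eq_dec v (body_vars xi)) as [Hb|Hb]; auto.
      assert (Hf : In v (frontier xi)).
      { apply frontier_spec. split; auto. unfold head_vars. apply in_flat_map. eauto. }
      rewrite Hext by auto. symmetry. apply (map_eq_In _ _ _ _ Hmap Hf).
    + unfold inst; simpl. replace (map hs (frontier xi)) with (map g (frontier xi)); auto.
      apply map_ext_in. intros v Hv. unfold hs.
      destruct (in_dec Nat.eq_dec v (body_vars xi)) as [Hb|Hb]; auto.
      exfalso; apply Hb, front_body; auto.
Qed.

Definition StepData (v : variant) (Sg : list TGD) (I : nat -> Instance) (t : nat -> Trigger)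
  (hf : nat -> nat -> Term) : Prop :=
  forall k, exists xi, nth_error Sg (fst (t k)) = Some xi /\
    hom_body xi (I k) (snd (t k)) /\ (v = Std -> ~ satisfied_ext xi (I k) (snd (t k))) /\
    extends_on xi (hf k) (snd (t k)) /\
    (forall z, existential xi z -> exists n, hf k z = Null n /\ ~ null_in n (I k)) /\
    (forall z1 z2, existential xi z1 -> existential xi z2 -> hf k z1 = hf k z2 -> z1 = z2) /\
    I (S k) = I k ++ map (inst (hf k)) (head xi).

Lemma step_choice v Sg I t : (forall k, step v Sg (I k) (t k) (I (S k))) ->
  exists hf, StepData v Sg I t hf.
Proof.
  intros H.
  destruct (fchoice (fun k h' => exists xi, nth_error Sg (fst (t k)) = Some xi /\
    hom_body xi (I k) (snd (t k)) /\ (v = Std -> ~ satisfied_ext xi (I k) (snd (t k))) /\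
    extends_on xi h' (snd (t k)) /\
    (forall z, existential xi z -> exists n, h' z = Null n /\ ~ null_in n (I k)) /\
    (forall z1 z2, existential xi z1 -> existential xi z2 -> h' z1 = h' z2 -> z1 = z2) /\
    I (S k) = I k ++ map (inst h') (head xi))) as [hf Hf].
  - intro k. destruct (H k) as (xi & Hn & Hb & Ha & h' & He & Hfr & Hd & Heq).
    exists h', xi. tauto.
  - exists hf. exact Hf.
Qed.

Lemma mono_app (I : nat -> Instance) : (forall k, exists X, I (S k) = I k ++ X) ->
  forall m n, m <= n -> incl (I m) (I n).
Proof.
  intros H m n Hmn. induction Hmn. apply incl_refl.
  destruct (H m0) as [X ->]. apply incl_appl; auto.
Qed.

Lemma stepdata_mono v Sg I t hf : StepData v Sg I t hf -> forall m n, m <= n -> incl (I m) (I n).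
Proof.
  intros H. apply mono_app. intro k. destruct (H k) as (xi & _ & _ & _ & _ & _ & _ & E). eauto.
Qed.

Definition isRb (a : Atom) : bool := match arel a with RBase _ => true | RH _ => false end.
Definition strip (I : Instance) := filter isRb I.
Definition xiof (Sg : list TGD) n := match nth_error Sg n with Some x => x | None => mkTGD [] [] end.

Lemma xiof_eq Sg n xi : nth_error Sg n = Some xi -> xiof Sg n = xi.
Proof. unfold xiof; intros ->; auto. Qed.

Lemma body_R Sg (HR : forall xi, In xi Sg -> over_R xi) n xi a h :
  nth_error Sg n = Some xi -> In a (body xi) -> isRb (inst h a) = true.
Proof.
  intros Hn Ha. destruct (HR xi (nth_error_In _ _ Hn)) as [Hb _].
  destruct (Hb a Ha) as [r Hr]. unfold isRb, inst; simpl. rewrite Hr; auto.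
Qed.

Lemma head_R Sg (HR : forall xi, In xi Sg -> over_R xi) n xi a h :
  nth_error Sg n = Some xi -> In a (head xi) -> isRb (inst h a) = true.
Proof.
  intros Hn Ha. destruct (HR xi (nth_error_In _ _ Hn)) as [_ Hb].
  destruct (Hb a Ha) as [r Hr]. unfold isRb, inst; simpl. rewrite Hr; auto.
Qed.

Lemma null_in_incl n L L' : incl L L' -> null_in n L -> null_in n L'.
Proof. intros Hi [a [Ha Hn]]. exists a; auto. Qed.
Section Back.
Variables (Sg : list TGD) (I : nat -> Instance) (t : nat -> Trigger) (hf : nat -> nat -> Term).
Hypothesis HR : forall xi, In xi Sg -> over_R xi.
Hypothesis Hst : StepData SObl Sg I t hf.
Hypothesis Hnso : forall k l, k < l -> ~ so_equiv Sg (t k) (t l).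
Hypothesis Hfair : forall k tr, is_trigger Sg (I k) tr -> exists j, so_equiv Sg (t j) tr.

Definition Hatom k := mkAtom (RH (fst (t k))) (map (snd (t k)) (frontier (xiof Sg (fst (t k))))).
Fixpoint Js k := match k with
  | 0 => strip (I 0)
  | S k => Js k ++ map (inst (hf k)) (head (enrich_tgd (fst (t k)) (xiof Sg (fst (t k)))))
  end.

Lemma Imono m n : m <= n -> incl (I m) (I n).
Proof. apply (stepdata_mono _ _ _ _ _ Hst). Qed.

Lemma Jmono m n : m <= n -> incl (Js m) (Js n).
Proof. apply mono_app. intro k. simpl. eauto. Qed.

Lemma Hinst k : inst (hf k) (mkVAtom (RH (fst (t k))) (frontier (xiof Sg (fst (t k))))) = Hatom k.
Proof.
  destruct (Hst k) as (xi & Hn & _ & _ & Hext & _).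
  unfold inst, Hatom; simpl. rewrite (xiof_eq _ _ _ Hn). f_equal.
  apply map_ext_in. intros v Hv. apply Hext, front_body; auto.
Qed.

Lemma Ja k a : In a (Js k) -> (isRb a = true /\ In a (I k)) \/ (exists m, m < k /\ a = Hatom m).
Proof.
  induction k; simpl; intro H.
  - unfold strip in H. apply filter_In in H. tauto.
  - apply in_app_or in H as [H|H].
    + destruct (IHk H) as [[H1 H2]|[m [H1 H2]]].
      * left; split; auto. apply (Imono k); auto.
      * right; exists m; split; auto.
    + apply in_map_iff in H as [b [<- Hb]].
      destruct (Hst k) as (xi & Hn & _ & _ & _ & _ & _ & Heq).
      rewrite (xiof_eq _ _ _ Hn) in Hb. simpl in Hb.
      apply in_app_or in Hb as [Hb|[<-|[]]].
      * left. split. eapply head_R; eauto.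
        rewrite Heq. apply in_or_app; right. apply in_map; auto.
      * right. exists k; split; auto. rewrite <- Hinst. rewrite (xiof_eq _ _ _ Hn). auto.
Qed.

Lemma Jb k a : isRb a = true -> In a (I k) -> In a (Js k).
Proof.
  intros Ha. induction k; simpl; intro H.
  - unfold strip. apply filter_In. auto.
  - destruct (Hst k) as (xi & Hn & _ & _ & _ & _ & _ & Heq).
    rewrite Heq in H. apply in_app_or in H as [H|H].
    + apply in_or_app; left; auto.
    + apply in_or_app; right. rewrite (xiof_eq _ _ _ Hn). simpl.
      apply in_map_iff in H as [b [<- Hb]]. apply in_map. apply in_or_app; left; auto.
Qed.

Lemma JH k : In (Hatom k) (Js (S k)).
Proof.
  simpl. apply in_or_app; right. rewrite <- Hinst. apply in_map. simpl.
  apply in_or_app; right. left; auto.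
Qed.

Lemma null_J k n : null_in n (Js k) -> null_in n (I k).
Proof.
  intros [a [Ha Hn]]. destruct (Ja k a Ha) as [[_ H]|[m [Hm ->]]].
  - exists a; auto.
  - destruct (Hst m) as (xi & Hnm & Hb & _).
    unfold Hatom in Hn; simpl in Hn. rewrite (xiof_eq _ _ _ Hnm) in Hn.
    apply in_map_iff in Hn as [x [Hx Hxf]]. apply front_body in Hxf.
    unfold body_vars in Hxf. apply in_flat_map in Hxf as [b [Hb1 Hb2]].
    exists (inst (snd (t m)) b). split.
    + apply (Imono m); [lia|]. apply Hb; auto.
    + unfold inst; simpl. rewrite <- Hx. apply in_map; auto.
Qed.

Lemma std_valid k : step Std (semi_enrichment Sg) (Js k) (t k) (Js (S k)).
Proof.
  destruct (Hst k) as (xi & Hn & Hb & _ & Hext & Hfr & Hd & Heq).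
  exists (enrich_tgd (fst (t k)) xi). split; [rewrite nth_semi, Hn; reflexivity|].
  split; [|split].
  - intros a Ha. apply Jb; [eapply body_R; eauto | apply Hb; auto].
  - intros _ [h'' [Hext'' Hhd]].
    assert (Hi : In (mkVAtom (RH (fst (t k))) (frontier xi)) (head (enrich_tgd (fst (t k)) xi))).
    { simpl. apply in_or_app; right; left; auto. }
    specialize (Hhd _ Hi). apply Ja in Hhd as [[Hc _]|[m [Hm Heqa]]].
    + discriminate.
    + unfold inst, Hatom in Heqa; simpl in Heqa. injection Heqa as E1 E2.
      destruct (Hst m) as (xm & Hnm & _).
      rewrite <- E1, Hn in Hnm. injection Hnm as <-.
      apply (Hnso m k Hm). split; auto. exists xi. split; [rewrite <- E1; auto|].
      rewrite <- E1, (xiof_eq _ _ _ Hn) in E2. rewrite <- E2.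
      apply map_ext_in. intros v Hv. apply Hext''. apply (front_body xi); auto.
  - exists (hf k). split; [exact Hext|]. split; [|split].
    + intros z Hz. apply existential_enrich in Hz. destruct (Hfr z Hz) as [n [E1 E2]].
      exists n; split; auto. intro H; apply E2, null_J; auto.
    + intros z1 z2 H1 H2. apply existential_enrich in H1, H2. auto.
    + simpl. rewrite (xiof_eq _ _ _ Hn). reflexivity.
Qed.

Lemma std_fair : fair Std (semi_enrichment Sg) Js t.
Proof.
  simpl. intros k tr (xe & Hn & Hb & Hns).
  rewrite nth_semi in Hn. destruct (nth_error Sg (fst tr)) as [xi|] eqn:E; simpl in Hn;
    inversion Hn; subst xe.
  assert (Ht : is_trigger Sg (I k) tr).
  { exists xi; split; auto. intros a Ha. specialize (Hb a Ha).
    apply Ja in Hb as [[_ H]|[m [_ Hm]]]; auto.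
    destruct (HR xi (nth_error_In _ _ E)) as [Hbo _]. destruct (Hbo a Ha) as [r Hr].
    apply (f_equal arel) in Hm. unfold inst, Hatom in Hm; simpl in Hm. congruence. }
  destruct (Hfair k tr Ht) as [j [Hf [xi' [Hn' Hm]]]].
  rewrite Hf, E in Hn'. injection Hn' as <-.
  exists (max k (S j)). split; [lia|].
  intros (xe & Hn2 & _ & Hns2). apply Hns2.
  rewrite nth_semi, E in Hn2. injection Hn2 as <-.
  destruct (Hst j) as (xj & Hnj & _ & _ & Hextj & _ & _ & Heqj).
  rewrite Hf, E in Hnj. injection Hnj as <-.
  apply sat_lemma with (hk := snd (t j)) (hk' := hf j); auto.
  - intros a Ha. apply (Jmono (S j)); [lia|]. apply Jb; [eapply head_R; eauto|].
    rewrite Heqj. apply in_or_app; right. apply in_map; auto.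
  - apply (Jmono (S j)); [lia|].
    assert (Hat : Hatom j = mkAtom (RH (fst tr)) (map (snd tr) (frontier xi))).
    { unfold Hatom. rewrite Hf, (xiof_eq _ _ _ E), Hm. reflexivity. }
    rewrite <- Hat. apply JH.
Qed.

Lemma back_inf : exists J tt, valid_inf Std (semi_enrichment Sg) (J 0) J tt /\
  fair Std (semi_enrichment Sg) J tt.
Proof.
  exists Js, t. split; [|apply std_fair].
  split; [reflexivity|]. split; [apply std_valid|]. intros; discriminate.
Qed.
End Back.

Lemma back_dir Sg (HR : forall xi, In xi Sg -> over_R xi) :
  CT Std (semi_enrichment Sg) -> CT SObl Sg.
Proof.
  intros HC I0 s Hs. destruct s as [n Is ts|Is ts]; simpl in *; [tauto|].
  destruct Hs as [[H0 [Hstep Hnso]] Hfair].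
  destruct (step_choice _ _ _ _ Hstep) as [hf Hhf].
  destruct (back_inf Sg Is ts hf HR Hhf (Hnso eq_refl) Hfair) as (J & tt & H1 & H2).
  exact (HC (J 0) (InfSeq J tt) (conj H1 H2)).
Qed.
Lemma filter_all_true {A} (f : A -> bool) l : (forall x, In x l -> f x = true) -> filter f l = l.
Proof. induction l; simpl; intros H; auto. rewrite H by auto. f_equal; auto. Qed.

Section Fwd.
Variables (Sg : list TGD) (I : nat -> Instance) (t : nat -> Trigger) (hf : nat -> nat -> Term).
Hypothesis HR : forall xi, In xi Sg -> over_R xi.
Hypothesis Hhf : StepData Std (semi_enrichment Sg) I t hf.

Lemma fwd_step k : step SObl Sg (strip (I k)) (t k) (strip (I (S k))).
Proof.
  destruct (Hhf k) as (xe & Hn & Hb & _ & Hext & Hfr & Hd & Heq).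
  rewrite nth_semi in Hn. destruct (nth_error Sg (fst (t k))) as [xi|] eqn:E; simpl in Hn;
    inversion Hn; subst xe.
  exists xi. split; auto. split; [|split].
  - intros a Ha. unfold strip. apply filter_In. split; [apply Hb; auto|eapply body_R; eauto].
  - intros; discriminate.
  - exists (hf k). split; [exact Hext|]. split; [|split].
    + intros z Hz. destruct (Hfr z (proj2 (existential_enrich _ _ _) Hz)) as [n [E1 E2]].
      exists n; split; auto. intros [a [Ha Hn']]. apply E2. exists a; split; auto.
      unfold strip in Ha; apply filter_In in Ha; tauto.
    + intros z1 z2 H1 H2. apply Hd; apply existential_enrich; auto.
    + rewrite Heq. unfold strip. rewrite filter_app. f_equal. simpl.
      rewrite map_app, filter_app. simpl. rewrite app_nil_r.
      apply filter_all_true. intros x Hx. apply in_map_iff in Hx as [a [<- Ha]].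
      eapply head_R; eauto.
Qed.

Lemma fwd_nso k l : k < l -> ~ so_equiv Sg (t k) (t l).
Proof.
  intros Hkl [Hf [xi [Hn Hm]]].
  destruct (Hhf l) as (xe & Hnl & _ & Hact & _).
  rewrite nth_semi, <- Hf, Hn in Hnl. injection Hnl as <-.
  apply Hact; [reflexivity|].
  destruct (Hhf k) as (xk & Hnk & _ & _ & Hextk & _ & _ & Heqk).
  rewrite nth_semi, Hn in Hnk. injection Hnk as <-.
  assert (Hinc : incl (I (S k)) (I l)) by (apply (stepdata_mono _ _ _ _ _ Hhf); lia).
  apply sat_lemma with (hk := snd (t k)) (hk' := hf k); auto.
  - intros a Ha. apply Hinc. rewrite Heqk. apply in_or_app; right. apply in_map.
    simpl. apply in_or_app; left; auto.
  - apply Hinc. rewrite Heqk. apply in_or_app; right. apply in_map_iff.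
    exists (mkVAtom (RH (fst (t k))) (frontier xi)). split.
    + unfold inst; simpl. f_equal. rewrite <- Hm. apply map_ext_in.
      intros v Hv. apply Hextk. apply (front_body xi); auto.
    + simpl. apply in_or_app; right; left; auto.
Qed.
End Fwd.
Definition rho (x : Term) := match x with Const c => Const c | Null n => Null (2*n) end.
Definition rA (a : Atom) := mkAtom (arel a) (map rho (aargs a)).

Lemma rho_inj x y : rho x = rho y -> x = y.
Proof. destruct x, y; simpl; intro H; inversion H; f_equal; lia. Qed.

Lemma map_inj {A B} (f : A -> B) : (forall x y, f x = f y -> x = y) ->
  forall l1 l2, map f l1 = map f l2 -> l1 = l2.
Proof.
  intros Hf; induction l1; intros [|b l2]; simpl; intro H; inversion H; auto.
  f_equal; auto.
Qed.

Lemma rA_inst h a : rA (inst h a) = inst (fun v => rho (h v)) a.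
Proof. unfold rA, inst; simpl. rewrite map_map. reflexivity. Qed.

Lemma null_rA m L : null_in (2*m) (map rA L) -> null_in m L.
Proof.
  intros [a [Ha Hn]]. apply in_map_iff in Ha as [b [<- Hb]].
  exists b. split; auto. unfold rA in Hn; simpl in Hn.
  apply in_map_iff in Hn as [[c|k] [Hx Hk]]; simpl in Hx; inversion Hx.
  replace m with k by lia. auto.
Qed.

Definition encT (x : Term) : nat := match x with Const c => 2*c | Null n => S (2*n) end.
Fixpoint encL (l : list nat) : nat :=
  match l with [] => 0 | x :: l => S (Cantor.to_nat (x, encL l)) end.
Definition code (c : nat * list Term) : nat := Cantor.to_nat (fst c, encL (map encT (snd c))).

Lemma to_nat_inj p q : Cantor.to_nat p = Cantor.to_nat q -> p = q.
Proof. intro H. rewrite <- (Cantor.cancel_of_to p), <- (Cantor.cancel_of_to q), H. auto. Qed.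

Lemma encT_inj x y : encT x = encT y -> x = y.
Proof. destruct x, y; simpl; intro H; f_equal; lia. Qed.

Lemma encL_inj l1 : forall l2, encL l1 = encL l2 -> l1 = l2.
Proof.
  induction l1; intros [|b l2]; cbn [encL]; intro H; try discriminate; auto.
  apply eq_add_S in H. apply to_nat_inj in H. injection H as -> H. f_equal; auto.
Qed.

Lemma code_inj c1 c2 : code c1 = code c2 -> c1 = c2.
Proof.
  destruct c1 as [a l], c2 as [b m]. unfold code; cbn [fst snd]. intro H.
  apply to_nat_inj in H. injection H as -> H. apply encL_inj in H.
  apply (map_inj _ encT_inj) in H. subst; auto.
Qed.

Lemma le_list_sum x l : In x l -> x <= list_sum l.
Proof. induction l; simpl; intro H; [destruct H|]. destruct H as [->|H]; [lia|]. specialize (IHl H); lia. Qed.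

Definition maxnull (J : Instance) : nat :=
  list_sum (flat_map (fun a => map (fun x => match x with Null n => n | Const _ => 0 end) (aargs a)) J).

Lemma maxnull_spec n J : null_in n J -> n <= maxnull J.
Proof.
  intros [a [Ha Hn]]. apply le_list_sum. apply in_flat_map. exists a. split; auto.
  apply in_map_iff. exists (Null n); auto.
Qed.

Lemma null_in_app n L1 L2 : null_in n (L1 ++ L2) -> null_in n L1 \/ null_in n L2.
Proof.
  intros [a [Ha Hn]]. apply in_app_or in Ha as [Ha|Ha]; [left|right]; exists a; auto.
Qed.

Section LMain.
Variables (Sg : list TGD) (D : nat -> Instance) (t : nat -> Trigger) (hD : nat -> nat -> Term).
Hypothesis Hst : StepData SObl Sg D t hD.
Hypothesis Hnso : forall k l, k < l -> ~ so_equiv Sg (t k) (t l).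

Definition rT m : Trigger := (fst (t m), fun v => rho (snd (t m) v)).
Definition key (tr : Trigger) : nat * list Term :=
  (fst tr, map (snd tr) (frontier (xiof Sg (fst tr)))).
Definition isD c := exists m, key (rT m) = c.
Definition pend (J : Instance) (f : list (nat * list Term)) tr :=
  is_trigger Sg J tr /\ ~ isD (key tr) /\ ~ In (key tr) f.
Definition pendmin J f tr :=
  pend J f tr /\ forall tr', pend J f tr' -> code (key tr) <= code (key tr').
Definition choose J f : option Trigger :=
  match excluded_middle_informative (exists tr, pendmin J f tr) with
  | left H => Some (proj1_sig (constructive_indefinite_description _ H))
  | right _ => None
  end.
Definition hx (J : Instance) (tr : Trigger) (v : nat) : Term :=
  if in_dec Nat.eq_dec v (body_vars (xiof Sg (fst tr))) then snd tr v
  else Null (S (2 * (maxnull J + v))).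
Definition extra J tr := J ++ map (inst (hx J tr)) (head (xiof Sg (fst tr))).
Definition Dnew m := map (inst (fun v => rho (hD m v))) (head (xiof Sg (fst (t m)))).

Definition trans (n : nat) (s : Instance * nat * list (nat * list Term)) :
    Trigger * (Instance * nat * list (nat * list Term)) :=
  let '(J, d, f) := s in
  if Nat.even n then (rT d, (J ++ Dnew d, S d, f)) else
  match choose J f with
  | Some tr => (tr, (extra J tr, d, key tr :: f))
  | None => (rT d, (J ++ Dnew d, S d, f))
  end.

Fixpoint st n := match n with 0 => (map rA (D 0), 0, []) | S n => snd (trans n (st n)) end.
Definition Fi n := fst (fst (st n)).
Definition dd n := snd (fst (st n)).
Definition fd n := snd (st n).
Definition tF n := fst (trans n (st n)).

Lemma char n :
  (tF n = rT (dd n) /\ Fi (S n) = Fi n ++ Dnew (dd n) /\ dd (S n) = S (dd n) /\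
   fd (S n) = fd n /\ (Nat.even n = true \/ choose (Fi n) (fd n) = None))
  \/ (Nat.even n = false /\ exists tr, choose (Fi n) (fd n) = Some tr /\ tF n = tr /\
      Fi (S n) = extra (Fi n) tr /\ dd (S n) = dd n /\ fd (S n) = key tr :: fd n).
Proof.
  unfold tF, Fi, dd, fd. simpl st. destruct (st n) as [[J d] f]. simpl.
  destruct (Nat.even n) eqn:E.
  - left. simpl. repeat split; auto.
  - destruct (choose J f) as [tr|] eqn:C.
    + right. simpl. split; auto. exists tr. repeat split; auto.
    + left. simpl. repeat split; auto.
Qed.

Lemma choose_some J f tr : choose J f = Some tr -> pendmin J f tr.
Proof.
  unfold choose. destruct excluded_middle_informative as [H|H]; intro E; inversion E.
  apply proj2_sig.
Qed.

Lemma choose_none J f : choose J f = None -> ~ exists tr, pendmin J f tr.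
Proof. unfold choose. destruct excluded_middle_informative as [H|H]; intro E; [discriminate|auto]. Qed.

Lemma min_exists J f : (exists tr, pend J f tr) -> exists tr, pendmin J f tr.
Proof.
  intros [tr H]. remember (code (key tr)) as n. revert tr H Heqn.
  induction n as [n IH] using lt_wf_ind. intros tr H Hn.
  destruct (classic (exists tr', pend J f tr' /\ code (key tr') < n)) as [[tr' [H1 H2]]|Hno].
  - apply (IH _ H2 tr' H1 eq_refl).
  - exists tr. split; auto. intros tr' H'.
    destruct (le_lt_dec (code (key tr)) (code (key tr'))); auto.
    exfalso; apply Hno; exists tr'; split; auto; lia.
Qed.

Lemma so_key t1 t2 : so_equiv Sg t1 t2 -> key t1 = key t2.
Proof.
  intros [Hf [xi [Hn Hm]]]. unfold key. rewrite <- Hf, (xiof_eq _ _ _ Hn), Hm. reflexivity.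
Qed.

Lemma key_so t1 t2 : (exists xi, nth_error Sg (fst t2) = Some xi) -> key t1 = key t2 ->
  so_equiv Sg t1 t2.
Proof.
  intros [xi Hn] H. unfold key in H. injection H as H1 H2. split; auto.
  exists xi. rewrite H1. split; auto. rewrite H1, (xiof_eq _ _ _ Hn) in H2. auto.
Qed.

Lemma Dnew_eq d : map rA (D (S d)) = map rA (D d) ++ Dnew d /\
  exists X, D (S d) = D d ++ X /\ Dnew d = map rA X.
Proof.
  destruct (Hst d) as (xi & Hn & _ & _ & _ & _ & _ & Heq).
  unfold Dnew. rewrite (xiof_eq _ _ _ Hn), Heq, map_app, map_map.
  split.
  - f_equal. apply map_ext. intro a. apply rA_inst.
  - eexists; split; [reflexivity|]. rewrite map_map. apply map_ext. intro a. symmetry; apply rA_inst.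
Qed.

Lemma inv n : incl (map rA (D (dd n))) (Fi n) /\
  (forall m, null_in (2*m) (Fi n) -> null_in m (D (dd n))) /\ NoDup (fd n) /\
  (forall c, In c (fd n) -> ~ isD c /\ exists j, j < n /\ key (tF j) = c).
Proof.
  induction n as [|n (IH1 & IH2 & IH3 & IH4)].
  - unfold Fi, dd, fd; cbn [st fst snd]. split; [apply incl_refl|]. split; [intro m; apply null_rA|].
    split; [constructor|]. intros c [].
  - destruct (char n) as [(Ht & HF & Hd & Hf & _) | (_ & tr & Hc & Ht & HF & Hd & Hf)];
      rewrite HF, Hd, Hf.
    + destruct (Dnew_eq (dd n)) as [E1 (X & E2 & E3)].
      split; [|split; [|split]].
      * rewrite E1. apply incl_app; [apply incl_appl; auto|apply incl_appr, incl_refl].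
      * intros m Hm. apply null_in_app in Hm as [Hm|Hm].
        -- apply (null_in_incl _ (D (dd n))); [rewrite E2; apply incl_appl, incl_refl|auto].
        -- rewrite E3 in Hm. apply null_rA in Hm.
           apply (null_in_incl _ X); [rewrite E2; apply incl_appr, incl_refl|auto].
      * auto.
      * intros c Hc. destruct (IH4 c Hc) as [H1 [j [Hj1 Hj2]]]. split; auto. exists j; split; auto.
    + apply choose_some in Hc. destruct Hc as [[(xi & Hn & Hb) [HnD Hnf]] _].
      split; [|split; [|split]].
      * unfold extra. apply incl_appl; auto.
      * intros m Hm. apply null_in_app in Hm as [Hm|Hm]; auto.
        destruct Hm as [a [Ha Hna]]. apply in_map_iff in Ha as [b [<- Hb']].
        unfold inst in Hna; simpl in Hna. apply in_map_iff in Hna as [x [Hx Hxb]].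
        unfold hx in Hx. rewrite (xiof_eq _ _ _ Hn) in Hx.
        destruct (in_dec Nat.eq_dec x (body_vars xi)) as [Hbx|Hbx]; [|inversion Hx; lia].
        apply IH2. unfold body_vars in Hbx. apply in_flat_map in Hbx as [b2 [Hb2 Hxb2]].
        exists (inst (snd tr) b2). split; [apply Hb; auto|].
        unfold inst; simpl. rewrite <- Hx. apply in_map; auto.
      * constructor; auto.
      * intros c [<-|Hc].
        -- split; auto. exists n; split; auto. rewrite Ht; auto.
        -- destruct (IH4 c Hc) as [H1 [j [Hj1 Hj2]]]. split; auto. exists j; split; auto.
Qed.

Lemma Fi_step n : step SObl Sg (Fi n) (tF n) (Fi (S n)).
Proof.
  destruct (char n) as [(Ht & HF & Hd & Hf & _) | (_ & tr & Hc & Ht & HF & Hd & Hf)];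
    rewrite Ht, HF.
  - destruct (Hst (dd n)) as (xi & Hn & Hb & _ & Hext & Hfr & Hdis & Heq).
    destruct (inv n) as (I1 & I2 & _).
    exists xi. split; [exact Hn|]. split; [|split].
    + intros a Ha. simpl. rewrite <- rA_inst. apply I1. apply in_map. apply Hb; auto.
    + intros; discriminate.
    + exists (fun v => rho (hD (dd n) v)). split; [|split; [|split]].
      * intros x Hx. simpl. rewrite Hext; auto.
      * intros z Hz. destruct (Hfr z Hz) as [k [E1 E2]]. exists (2*k).
        rewrite E1; split; [reflexivity|]. intro H; apply E2, I2; auto.
      * intros z1 z2 H1 H2 E. apply Hdis; auto. apply rho_inj; auto.
      * unfold Dnew. rewrite (xiof_eq _ _ _ Hn). reflexivity.
  - apply choose_some in Hc. destruct Hc as [[(xi & Hn & Hb) _] _].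
    exists xi. split; [exact Hn|]. split; [exact Hb|]. split; [intros; discriminate|].
    exists (hx (Fi n) tr). split; [|split; [|split]].
    + intros x Hx. unfold hx. rewrite (xiof_eq _ _ _ Hn).
      destruct (in_dec Nat.eq_dec x (body_vars xi)); tauto.
    + intros z [_ Hz]. unfold hx. rewrite (xiof_eq _ _ _ Hn).
      destruct (in_dec Nat.eq_dec z (body_vars xi)); [tauto|].
      eexists; split; [reflexivity|]. intro H. apply maxnull_spec in H. lia.
    + intros z1 z2 [_ H1] [_ H2]. unfold hx. rewrite (xiof_eq _ _ _ Hn).
      destruct (in_dec Nat.eq_dec z1 (body_vars xi)); [tauto|].
      destruct (in_dec Nat.eq_dec z2 (body_vars xi)); [tauto|].
      intro E; inversion E; lia.
    + unfold extra. rewrite (xiof_eq _ _ _ Hn). reflexivity.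
Qed.

Lemma kind n : (exists m, tF n = rT m /\ dd n = m /\ dd (S n) = S m) \/
  (~ isD (key (tF n)) /\ ~ In (key (tF n)) (fd n) /\ fd (S n) = key (tF n) :: fd n /\
   dd (S n) = dd n).
Proof.
  destruct (char n) as [(Ht & HF & Hd & Hf & _) | (_ & tr & Hc & Ht & HF & Hd & Hf)].
  - left. eauto.
  - right. apply choose_some in Hc. destruct Hc as [[_ [H1 H2]] _]. subst. tauto.
Qed.

Lemma dd_mono m n : m <= n -> dd m <= dd n.
Proof.
  induction 1; auto. destruct (kind m0) as [(k & _ & E1 & E2)|(_ & _ & _ & E)]; lia.
Qed.

Lemma fd_mono m n : m <= n -> incl (fd m) (fd n).
Proof.
  induction 1; [apply incl_refl|]. destruct (kind m0) as [(k & _ & E1 & E2)|(_ & _ & E & _)].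
  - destruct (char m0) as [(_ & _ & _ & Hf & _) | (_ & tr & _ & _ & _ & Hd & _)]; [rewrite Hf; auto|lia].
  - rewrite E. apply incl_tl; auto.
Qed.

Lemma Fi_mono m n : m <= n -> incl (Fi m) (Fi n).
Proof.
  apply mono_app. intro k.
  destruct (char k) as [(_ & HF & _) | (_ & tr & _ & _ & HF & _)]; rewrite HF; [eauto|].
  unfold extra; eauto.
Qed.

Lemma dd0 : dd 0 = 0.
Proof. reflexivity. Qed.

Lemma dd_even p : p <= dd (2*p).
Proof.
  induction p; [lia|].
  assert (Ev : Nat.even (2*p) = true) by (rewrite Nat.even_mul; reflexivity).
  destruct (char (2*p)) as [(_ & _ & Hd & _) | (E & _)]; [|congruence].
  pose proof (dd_mono (S (2*p)) (2 * S p) ltac:(lia)). lia.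
Qed.

Lemma find_D m : exists n, tF n = rT m.
Proof.
  assert (H : forall N, m < dd N -> exists n, dd n = m /\ dd (S n) = S m).
  { induction N; intro H; [rewrite dd0 in H; lia|].
    destruct (lt_dec m (dd N)); auto. exists N.
    destruct (kind N) as [(k & _ & E1 & E2)|(_ & _ & _ & E)]; lia. }
  destruct (H (2 * S m)) as [n [E1 E2]]; [pose proof (dd_even (S m)); lia|].
  exists n. destruct (kind n) as [(k & Ht & E3 & E4)|(_ & _ & _ & E)]; [|lia].
  subst; auto.
Qed.

Lemma Fi_nso j l : j < l -> ~ so_equiv Sg (tF j) (tF l).
Proof.
  intros Hjl Hso. pose proof (so_key _ _ Hso) as Hk.
  destruct (kind j) as [(m1 & E1 & Ed1 & Ed1')|(Nd1 & Nf1 & Ef1 & _)];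
  destruct (kind l) as [(m2 & E2 & Ed2 & _)|(Nd2 & Nf2 & _)].
  - pose proof (dd_mono (S j) l ltac:(lia)). rewrite E1, E2 in Hso.
    apply (Hnso m1 m2); [lia|].
    destruct Hso as [Hf [xi [Hn Hm]]]. simpl in Hf, Hn, Hm. split; auto. exists xi. split; auto.
    rewrite <- (map_map (snd (t m1)) rho), <- (map_map (snd (t m2)) rho) in Hm.
    apply (map_inj _ rho_inj) in Hm. auto.
  - apply Nd2. exists m1. rewrite <- Hk, E1. auto.
  - apply Nd1. exists m2. rewrite Hk, E2. auto.
  - apply Nf2. rewrite <- Hk. apply (fd_mono (S j)); [lia|]. rewrite Ef1. left; auto.
Qed.

Lemma Fi_fair k tr : is_trigger Sg (Fi k) tr -> exists j, so_equiv Sg (tF j) tr.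
Proof.
  intros Htr. assert (Hx : exists xi, nth_error Sg (fst tr) = Some xi)
    by (destruct Htr as [xi [Hn _]]; eauto).
  enough (exists j, key (tF j) = key tr) as [j Hj] by (exists j; apply key_so; auto).
  destruct (classic (isD (key tr))) as [[m Hm]|HnD].
  - destruct (find_D m) as [n Hn]. exists n. rewrite Hn; auto.
  - apply NNPP. intro Hnone.
    assert (Hpend : forall n, k <= n -> pend (Fi n) (fd n) tr).
    { intros n Hn. split; [|split; auto].
      - destruct Htr as [xi [Hn1 Hb]]. exists xi; split; auto.
        intros a Ha. apply (Fi_mono k); auto.
      - intro Hin. destruct (inv n) as (_ & _ & _ & I4). destruct (I4 _ Hin) as [_ [j [_ Hj]]].
        apply Hnone; eauto. }
    set (C := code (key tr)).
    assert (Hgrow : forall n l, k <= n -> fd n = l ++ fd k -> (forall c, In c l -> code c < C) ->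
      exists l', fd (S n) = l' ++ fd k /\ length l <= length l' /\
        (forall c, In c l' -> code c < C) /\ (Nat.even n = false -> S (length l) <= length l')).
    { intros n l Hkn Hl Hc.
      destruct (char n) as [(_ & _ & _ & Hf & Hor) | (_ & tr0 & Hc0 & Ht & _ & _ & Hf)].
      - exists l. rewrite Hf. split; auto. split; auto. split; auto.
        intros Ev. destruct Hor as [Ho|Ho]; [congruence|].
        exfalso. apply (choose_none _ _ Ho). apply min_exists. exists tr. apply Hpend; auto.
      - apply choose_some in Hc0. destruct Hc0 as [_ Hmin].
        specialize (Hmin tr (Hpend n Hkn)).
        assert (Hne : key tr0 <> key tr) by (intro E; apply Hnone; exists n; rewrite Ht; auto).
        assert (Hlt : code (key tr0) < C).
        { unfold C. destruct (Nat.eq_dec (code (key tr0)) (code (key tr))) as [E|E].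
          - apply code_inj in E. contradiction.
          - lia. }
        exists (key tr0 :: l). rewrite Hf, Hl. split; auto. simpl. split; [lia|]. split; [|lia].
        intros c [<-|Hc']; auto. }
    assert (Hcount : forall p, exists l, fd (k + 2*p) = l ++ fd k /\ p <= length l /\
      (forall c, In c l -> code c < C)).
    { induction p.
      - exists []. rewrite Nat.add_0_r. simpl. split; auto. split; [lia|]. intros c [].
      - destruct IHp as [l (H1 & H2 & H3)].
        destruct (Hgrow (k + 2*p) l ltac:(lia) H1 H3) as (l1 & G1 & G2 & G3 & G4).
        destruct (Hgrow (S (k + 2*p)) l1 ltac:(lia) G1 G3) as (l2 & K1 & K2 & K3 & K4).
        exists l2. replace (k + 2 * S p) with (S (S (k + 2*p))) by lia.
        split; auto. split; auto.
        destruct (Nat.even (k + 2*p)) eqn:Ev.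
        + assert (Nat.even (S (k + 2*p)) = false) by (rewrite Nat.even_succ, <- Nat.negb_even, Ev; auto).
          specialize (K4 H). lia.
        + specialize (G4 eq_refl). lia. }
    destruct (Hcount (S C)) as [l (H1 & H2 & H3)].
    destruct (inv (k + 2 * S C)) as (_ & _ & ND & _). rewrite H1 in ND.
    apply NoDup_app_remove_r in ND.
    assert (ND2 : NoDup (map code l)).
    { apply Injective_map_NoDup; auto. intros x y; apply code_inj. }
    assert (Hinc : incl (map code l) (seq 0 C)).
    { intros y Hy. apply in_map_iff in Hy as [c [<- Hc]]. apply in_seq. specialize (H3 c Hc). lia. }
    pose proof (NoDup_incl_length ND2 Hinc). rewrite length_map, length_seq in H. lia.
Qed.

Lemma L_main : ~ CT SObl Sg.
Proof.
  intros HC. apply (HC (Fi 0) (InfSeq Fi tF)). split.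
  - split; [reflexivity|]. split; [apply Fi_step|]. intros _; apply Fi_nso.
  - intros k tr H. eapply Fi_fair; eauto.
Qed.
End LMain.

Lemma fwd_dir Sg (HR : forall xi, In xi Sg -> over_R xi) :
  CT SObl Sg -> CT Std (semi_enrichment Sg).
Proof.
  intros HC I0 s Hs. destruct s as [n Is ts|Is ts]; simpl in *; [tauto|].
  destruct Hs as [[H0 [Hstep _]] _].
  destruct (step_choice _ _ _ _ Hstep) as [hf Hhf].
  pose proof (fwd_step Sg Is ts hf HR Hhf) as Hs2.
  destruct (step_choice SObl Sg (fun k => strip (Is k)) ts Hs2) as [hD HD].
  exact (L_main Sg (fun k => strip (Is k)) ts hD HD (fwd_nso Sg Is ts hf Hhf) HC).
Qed.

Theorem theorem10 (Sigma : list TGD) (HR : forall xi, In xi Sigma -> over_R xi) :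
  CT SObl Sigma <-> CT Std (semi_enrichment Sigma).
Proof. split; [apply fwd_dir | apply back_dir]; auto. Qed.
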